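(* Let $L$ be an $\omega$-regular language that is tDCW-positive. Then every two nice tDCWs $\mathcal{A}_1,\mathcal{A}_2$ recognizing $L$ that are minimal (no tDCW recognizing $L$ has fewer states) are safe isomorphic.
   Context: A tNCW is $\mathcal{A}=\langle\Sigma,Q,q_0,\delta,\alpha\rangle$: finite alphabet $\Sigma$, finite state set $Q$, initial state $q_0$, transition function $\delta:Q\times\Sigma\to 2^Q\setminus\{\emptyset\}$ with transition relation $\Delta=\{\langle q,\sigma,s\rangle:s\in\delta(q,\sigma)\}$, and $\alpha\subseteq\Delta$; its size is $|Q|$. $\alpha$-transitions are those in $\alpha$, $\bar\alpha$-transitions those in $\Delta\setminus\alpha$; $\delta^{\bar\alpha}(q,\sigma)$ denotes the $\sigma$-successors via $\bar\alpha$-transitions. A run on $w=\sigma_1\sigma_2\cdots$ is $r_0r_1\cdots$ with $r_0=q_0$, $r_{i+1}\in\delta(r_i,\sigma_{i+1})$; accepting iff it traverses $\alpha$-transitions only finitely often; $L(\mathcal{A})$ the accepted language. A tDCW is a tNCW with $|\delta(q,\sigma)|=1$ for all $q,\sigma$. $\mathcal{A}^q$ is $\mathcal{A}$ with initial state $q$; $q\sim s$ iff $L(\mathcal{A}^q)=L(\mathcal{A}^s)$. $\mathcal{A}$ is GFG if there is $f:\Sigma^*\to Q$ with $f(\epsilon)=q_0$, $\langle f(u),\sigma,f(u\sigma)\rangle\in\Delta$ for all $u,\sigma$, and for every $w\in L(\mathcal{A})$ the run $f(w[1,0]),f(w[1,1]),\dots$ accepting; $q$ is GFG if $\mathcal{A}^q$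 is. Nice: all states reachable and GFG, semantically deterministic (all $\sigma$-successors of a state pairwise $\sim$), safe deterministic ($|\delta^{\bar\alpha}(q,\sigma)|\le1$), and normal (a path of $\bar\alpha$-transitions from $q$ to $s$ implies one from $s$ to $q$). An $\omega$-regular language $L$ is tDCW-positive if the minimal number of states of a tDCW recognizing $L$ is not larger than the minimal number of states of a GFG-tNCW recognizing $L$. Two tNCWs $\mathcal{A},\mathcal{B}$ are safe isomorphic if there is a bijection $\kappa:Q_\mathcal{A}\to Q_\mathcal{B}$ such that for all $q,q'\in Q_\mathcal{A}$ and $\sigma\in\Sigma$: $q'\in\delta^{\bar\alpha}_\mathcal{A}(q,\sigma)$ iff $\kappa(q')\in\delta^{\bar\alpha}_\mathcal{B}(\kappa(q),\sigma)$. *)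

(* Defs.v *)
From Stdlib Require Import Relations.
From mathcomp Require Import all_boot.

Set Implicit Arguments. Unset Strict Implicit. Unset Printing Implicit Defensive.

(* Infinite words over Sigma: w = sigma_1 sigma_2 ... is represented by
   w : nat -> Sigma with w i = sigma_{i+1}. *)
Definition word (Sigma : Type) := nat -> Sigma.
Definition language (Sigma : Type) := word Sigma -> Prop.

Definition prefix (Sigma : Type) (w : word Sigma) (i : nat) : seq Sigma :=
  [seq w k | k <- iota 0 i].

(* alpha is a predicate on triples; the alpha-transitions are the triples in
   Delta that satisfy alpha (so alpha is effectively a subset of Delta). *)
Record tNCW (Sigma Q : finType) := TNCW {
  init : Q;
  delta : Q -> Sigma -> {set Q};
  delta_ne : forall q a, delta q a != set0;
  alpha : Q -> Sigma -> Q -> bool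
}.

Section Aut.
Variables (Sigma Q : finType) (A : tNCW Sigma Q).

Definition in_Delta (q : Q) (a : Sigma) (s : Q) : bool := s \in delta A q a.
Definition alpha_trans (q : Q) (a : Sigma) (s : Q) : bool :=
  in_Delta q a s && alpha A q a s.
Definition nalpha_trans (q : Q) (a : Sigma) (s : Q) : bool :=
  in_Delta q a s && ~~ alpha A q a s.

Definition with_init (q : Q) : tNCW Sigma Q :=
  @TNCW Sigma Q q (delta A) (@delta_ne _ _ A) (alpha A).

Definition is_run (w : word Sigma) (r : nat -> Q) : Prop :=
  r 0 = init A /\ forall i, in_Delta (r i) (w i) (r i.+1).

Definition run_accepting (w : word Sigma) (r : nat -> Q) : Prop :=
  exists N, forall i, N <= i -> ~~ alpha A (r i) (w i) (r i.+1).

Definition accepts (w : word Sigma) : Prop :=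
  exists r, is_run w r /\ run_accepting w r.

Definition recognizes (L : language Sigma) : Prop :=
  forall w, L w <-> accepts w.

Definition is_tDCW : Prop := forall q a, #|delta A q a| = 1.

Definition is_GFG : Prop :=
  exists f : seq Sigma -> Q,
    f [::] = init A /\
    (forall u a, in_Delta (f u) a (f (rcons u a))) /\
    (forall w, accepts w -> run_accepting w (fun i => f (prefix w i))).

Definition step (q s : Q) : Prop := exists a, in_Delta q a s.
Definition nalpha_step (q s : Q) : Prop := exists a, nalpha_trans q a s.

Definition reachable (q : Q) : Prop := clos_refl_trans Q step (init A) q.

End Aut.

Definition equiv_states (Sigma Q : finType) (A : tNCW Sigma Q) (q s : Q) : Prop :=
  forall w, accepts (with_init A q) w <-> accepts (with_init A s) w.

Section Aut2.
Variables (Sigma Q : finType) (A : tNCW Sigma Q).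

Definition semantically_deterministic : Prop :=
  forall q a s s', in_Delta A q a s -> in_Delta A q a s' -> equiv_states A s s'.

Definition safe_deterministic : Prop :=
  forall q a s s', nalpha_trans A q a s -> nalpha_trans A q a s' -> s = s'.

Definition normal : Prop :=
  forall q s, clos_refl_trans Q (nalpha_step A) q s ->
              clos_refl_trans Q (nalpha_step A) s q.

Definition nice : Prop :=
  (forall q, reachable A q) /\
  (forall q, is_GFG (with_init A q)) /\
  semantically_deterministic /\ safe_deterministic /\ normal.

End Aut2.

Record NBW (Sigma Q : finType) := MkNBW {
  binit : Q;
  bdelta : Q -> Sigma -> {set Q};
  bacc : {set Q}
}.

Definition nbw_accepts (Sigma Q : finType) (B : NBW Sigma Q) (w : word Sigma) : Prop :=
  exists r : nat -> Q, r 0 = binit B /\ (forall i, r i.+1 \in bdelta B (r i) (w i)) /\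
    (forall N, exists i, N <= i /\ r i \in bacc B).

Definition omega_regular (Sigma : finType) (L : language Sigma) : Prop :=
  exists (Q : finType) (B : NBW Sigma Q), forall w, L w <-> nbw_accepts B w.

(* min #states of a tDCW for L <= min #states of a GFG-tNCW for L:
   every GFG-tNCW for L is matched by a tDCW for L that is no larger. *)
Definition tDCW_positive (Sigma : finType) (L : language Sigma) : Prop :=
  forall (Q : finType) (B : tNCW Sigma Q), is_GFG B -> recognizes B L ->
    exists (Q' : finType) (D : tNCW Sigma Q'),
      is_tDCW D /\ recognizes D L /\ #|Q'| <= #|Q|.

Definition minimal_tDCW (Sigma Q : finType) (A : tNCW Sigma Q) (L : language Sigma) : Prop :=
  forall (Q' : finType) (D : tNCW Sigma Q'), is_tDCW D -> recognizes D L -> #|Q| <= #|Q'|.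

Definition safe_isomorphic (Sigma Q1 Q2 : finType)
    (A : tNCW Sigma Q1) (B : tNCW Sigma Q2) : Prop :=
  exists kappa : Q1 -> Q2, bijective kappa /\
    forall (q q' : Q1) (a : Sigma),
      nalpha_trans A q a q' <-> nalpha_trans B (kappa q) a (kappa q').

(* Main.v *)
From Stdlib Require Import Relations ClassicalEpsilon Classical FunctionalExtensionality.
From mathcomp Require Import all_boot.
Require Import Defs.

Set Implicit Arguments. Unset Strict Implicit. Unset Printing Implicit Defensive.

Definition pb (P : Prop) : bool := if excluded_middle_informative P then true else false.
Lemma pbP P : reflect P (pb P).
Proof. rewrite /pb; case: excluded_middle_informative => h; [left|right]; done. Qed.

Definition shiftw (Sigma : Type) (w : word Sigma) m : word Sigma := fun i => w (m + i).
Definition catw (Sigma : Type) (u : seq Sigma) (w : word Sigma) : word Sigma :=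
  fun n => if n < size u then nth (w 0) u n else w (n - size u).
Definition omegaw (Sigma : Type) (x0 : Sigma) (y : seq Sigma) : word Sigma :=
  fun n => nth x0 y (n %% size y).

Lemma prefix0 Sigma (w : word Sigma) : prefix w 0 = [::].
Proof. by []. Qed.

Lemma prefixS Sigma (w : word Sigma) n : prefix w n.+1 = rcons (prefix w n) (w n).
Proof. by rewrite /prefix -addn1 iotaD map_cat /= cats1. Qed.

Lemma prefixD Sigma (w : word Sigma) m n :
  prefix w (m + n) = prefix w m ++ prefix (shiftw w m) n.
Proof.
rewrite /prefix iotaD map_cat; congr (_ ++ _).
by rewrite add0n -{1}(addn0 m) iotaDl -map_comp.
Qed.

Lemma prefix_size Sigma (w : word Sigma) n : size (prefix w n) = n.
Proof. by rewrite size_map size_iota. Qed.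

Lemma prefix_take Sigma (w : word Sigma) m n : n <= m -> prefix w n = take n (prefix w m).
Proof. by move=> h; rewrite /prefix -map_take take_iota (minn_idPl h). Qed.

Lemma shiftwD Sigma (w : word Sigma) m n : shiftw (shiftw w m) n = shiftw w (m + n).
Proof. by apply: functional_extensionality => i; rewrite /shiftw addnA. Qed.

Lemma prefix_catw Sigma (u : seq Sigma) w : prefix (catw u w) (size u) = u.
Proof.
rewrite /prefix /catw.
have -> : [seq (if k < size u then nth (w 0) u k else w (k - size u)) | k <- iota 0 (size u)]
   = [seq nth (w 0) u k | k <- iota 0 (size u)].
  by apply/eq_in_map => k; rewrite mem_iota add0n => /andP [_ ->].
exact: mkseq_nth.
Qed.

Lemma shift_catw Sigma (u : seq Sigma) w : shiftw (catw u w) (size u) = w.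
Proof.
apply: functional_extensionality => i; rewrite /shiftw /catw.
by rewrite ltnNge leq_addr /= addKn.
Qed.

Lemma shift_omega Sigma (x0 : Sigma) y k : shiftw (omegaw x0 y) (k * size y) = omegaw x0 y.
Proof.
apply: functional_extensionality => i; rewrite /shiftw /omegaw.
by rewrite modnMDl.
Qed.

Lemma prefix_omega Sigma (x0 : Sigma) y : prefix (omegaw x0 y) (size y) = y.
Proof.
rewrite /prefix /omegaw.
have -> : [seq nth x0 y (k %% size y) | k <- iota 0 (size y)] = [seq nth x0 y k | k <- iota 0 (size y)].
  by apply/eq_in_map => k; rewrite mem_iota add0n => /andP [_ h]; rewrite modn_small.
exact: mkseq_nth.
Qed.

Section Det.
Variables (Sigma Q : finType) (d : Q -> Sigma -> {set Q}) (al : Q -> Sigma -> Q -> bool).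

Definition nxt q a := odflt q [pick s in d q a].
Definition st q (u : seq Sigma) := foldl nxt q u.
Fixpoint sf q u := match u with
  | [::] => true
  | x :: u' => ~~ al q x (nxt q x) && sf (nxt q x) u' end.

Lemma st_cat q u v : st q (u ++ v) = st (st q u) v.
Proof. exact: foldl_cat. Qed.
Lemma st_rcons q u x : st q (rcons u x) = nxt (st q u) x.
Proof. exact: foldl_rcons. Qed.
Lemma sf_cat q u v : sf q (u ++ v) = sf q u && sf (st q u) v.
Proof. by elim: u q => [|x u IH] q //=; rewrite IH andbA. Qed.
Lemma sf_rcons q u x : sf q (rcons u x) = sf q u && ~~ al (st q u) x (st q (rcons u x)).
Proof. by rewrite -cats1 sf_cat /= andbT st_cat. Qed.
Lemma sf_catl q u v : sf q (u ++ v) -> sf q u.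
Proof. by rewrite sf_cat => /andP []. Qed.
Lemma sf_take q u n : sf q u -> sf q (take n u).
Proof. by rewrite -{1}(cat_take_drop n u); apply: sf_catl. Qed.

Hypothesis det : forall q a, #|d q a| = 1.

Lemma inD q a s : (s \in d q a) = (s == nxt q a).
Proof.
have /cards1P [x hx] : #|d q a| == 1 by rewrite det.
rewrite /nxt hx in_set1.
case: pickP => [y|]; first by rewrite in_set1 => /eqP ->.
by move=> /(_ x); rewrite in_set1 eqxx.
Qed.

Lemma nxt_in q a : nxt q a \in d q a.
Proof. by rewrite inD. Qed.

Lemma sf_prefix q w n :
  sf q (prefix w n) = [forall i : 'I_n, ~~ al (st q (prefix w i)) (w i) (st q (prefix w i.+1))].
Proof.
elim: n => [|n IH]; first by apply/esym/forallP => [[]].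
rewrite prefixS sf_rcons IH -prefixS.
apply/andP/forallP => [[/forallP h1 h2] i|h].
  case: (ltnP i n) => hi; first by exact: (h1 (Ordinal hi)).
  have -> : nat_of_ord i = n by apply/eqP; rewrite eqn_leq hi -ltnS ltn_ord.
  done.
split; last exact: (h ord_max).
by apply/forallP => i; exact: (h (widen_ord (leqnSn n) i)).
Qed.

Lemma sf_prefixP q w n :
  reflect (forall i, i < n -> ~~ al (st q (prefix w i)) (w i) (st q (prefix w i.+1))) (sf q (prefix w n)).
Proof.
rewrite sf_prefix; apply: (iffP forallP) => h i.
  by move=> hi; exact: (h (Ordinal hi)).
exact: h.
Qed.

End Det.

Lemma st_prefixD (Sigma Q : finType) (d : Q -> Sigma -> {set Q}) q w m n :
  st d q (prefix w (m + n)) = st d (st d q (prefix w m)) (prefix (shiftw w m) n).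
Proof. by rewrite prefixD st_cat. Qed.
Section Aut.
Variables (Sigma Q : finType) (A : tNCW Sigma Q).
Hypothesis detA : is_tDCW A.

Lemma accE c w : accepts (with_init A c) w <-> exists N, forall i, N <= i ->
  ~~ alpha A (st (delta A) c (prefix w i)) (w i) (st (delta A) c (prefix w i.+1)).
Proof.
split.
- case=> r [[r0 rS] [N hN]]; exists N => i hi.
  have E : forall i, r i = st (delta A) c (prefix w i).
    elim => [|j IH]; first exact: r0.
    rewrite (prefixS w j) st_rcons -IH.
    by apply/eqP; rewrite -(inD detA); exact: rS j.
  by rewrite -!E; exact: hN.
- case=> N hN; exists (fun i => st (delta A) c (prefix w i)); split; [split|].
  + done.
  + by move=> i; rewrite /in_Delta prefixS st_rcons; exact: (nxt_in detA).
  + by exists N => i hi; exact: hN.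
Qed.

Lemma acc_shift c w m : accepts (with_init A c) w <->
  accepts (with_init A (st (delta A) c (prefix w m))) (shiftw w m).
Proof.
rewrite !accE; split.
- case=> N hN; exists N => i hi.
  rewrite -!st_prefixD addnS; apply: hN.
  exact: leq_trans hi (leq_addl _ _).
- case=> N hN; exists (m + N) => i hi.
  have hi' : N <= i - m by rewrite leq_subRL // (leq_trans (leq_addr _ _) hi).
  have := hN _ hi'; rewrite -!st_prefixD addnS /shiftw subnKC //.
  exact: leq_trans (leq_addr _ _) hi.
Qed.

Lemma acc_cat c u w : accepts (with_init A c) (catw u w) <->
  accepts (with_init A (st (delta A) c u)) w.
Proof. by rewrite (acc_shift c _ (size u)) prefix_catw shift_catw. Qed.

Lemma acc_safe c w : (forall n, sf (delta A) (alpha A) c (prefix w n)) ->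
  accepts (with_init A c) w.
Proof.
move=> h; apply/accE; exists 0 => i _.
by move/sf_prefixP: (h i.+1); apply.
Qed.

Lemma st_omega c x0 y : st (delta A) c y = c ->
  forall k, st (delta A) c (prefix (omegaw x0 y) (k * size y)) = c.
Proof.
move=> hy; elim => [|k IH] //.
by rewrite mulSnr st_prefixD IH shift_omega prefix_omega.
Qed.

Lemma omega_acc c x0 y : sf (delta A) (alpha A) c y -> st (delta A) c y = c -> 0 < size y ->
  accepts (with_init A c) (omegaw x0 y).
Proof.
move=> hs hy hp; apply: acc_safe => n.
have hk : forall k, sf (delta A) (alpha A) c (prefix (omegaw x0 y) (k * size y)).
  elim => [|k IH] //.
  by rewrite mulSnr prefixD sf_cat IH (st_omega x0 hy) shift_omega prefix_omega.
rewrite (prefix_take _ (leq_pmulr n hp)); exact: sf_take.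
Qed.

Lemma omega_rej c x0 y : st (delta A) c y = c -> ~~ sf (delta A) (alpha A) c y -> 0 < size y ->
  ~ accepts (with_init A c) (omegaw x0 y).
Proof.
move=> hy hs hp /accE [N hN].
move/negP: hs; apply.
rewrite -(prefix_omega x0 y) -(shift_omega x0 y N) -{1}(st_omega x0 hy N).
apply/sf_prefixP => i hi.
rewrite -!st_prefixD addnS; apply: hN.
exact: leq_trans (leq_pmulr N hp) (leq_addr _ _).
Qed.

End Aut.

Definition eqv (Sigma Q1 Q2 : finType) (A : tNCW Sigma Q1) (c : Q1) (B : tNCW Sigma Q2) (d : Q2) :=
  forall w, accepts (with_init A c) w <-> accepts (with_init B d) w.
Definition sub (Sigma Q1 Q2 : finType) (A : tNCW Sigma Q1) (c : Q1) (B : tNCW Sigma Q2) (d : Q2) :=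
  forall u, sf (delta A) (alpha A) c u -> sf (delta B) (alpha B) d u.

Lemma eqv_st (Sigma Q1 Q2 : finType) (A : tNCW Sigma Q1) (B : tNCW Sigma Q2) c d u :
  is_tDCW A -> is_tDCW B -> eqv A c B d -> eqv A (st (delta A) c u) B (st (delta B) d u).
Proof. by move=> hA hB h w; rewrite -(acc_cat hA) -(acc_cat hB). Qed.

Lemma sub_st (Sigma Q1 Q2 : finType) (A : tNCW Sigma Q1) (B : tNCW Sigma Q2) c d u :
  sub A c B d -> sf (delta A) (alpha A) c u -> sub A (st (delta A) c u) B (st (delta B) d u).
Proof.
move=> h hu v hv.
have := h (u ++ v); rewrite !sf_cat hu hv => /(_ isT) /andP [_ ->] //.
Qed.

Lemma eqv_sym (Sigma Q1 Q2 : finType) (A : tNCW Sigma Q1) (B : tNCW Sigma Q2) c d :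
  eqv A c B d -> eqv B d A c.
Proof. by move=> h w; rewrite h. Qed.

Lemma eqv_trans (Sigma Q1 Q2 Q3 : finType) (A : tNCW Sigma Q1) (B : tNCW Sigma Q2)
  (C : tNCW Sigma Q3) c d e : eqv A c B d -> eqv B d C e -> eqv A c C e.
Proof. by move=> h1 h2 w; rewrite h1 h2. Qed.

Lemma sub_trans (Sigma Q1 Q2 Q3 : finType) (A : tNCW Sigma Q1) (B : tNCW Sigma Q2)
  (C : tNCW Sigma Q3) c d e : sub A c B d -> sub B d C e -> sub A c C e.
Proof. by move=> h1 h2 u /h1 /h2. Qed.

Lemma sub_refl (Sigma Q1 : finType) (A : tNCW Sigma Q1) c : sub A c A c.
Proof. by []. Qed.

Lemma eqv_refl (Sigma Q1 : finType) (A : tNCW Sigma Q1) c : eqv A c A c.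
Proof. by []. Qed.

Lemma eqv_init (Sigma Q1 Q2 : finType) (L : language Sigma) (A : tNCW Sigma Q1) (B : tNCW Sigma Q2) :
  recognizes A L -> recognizes B L -> eqv A (init A) B (init B).
Proof. by move=> hA hB w; rewrite -[accepts _ w]/(accepts A w) -hA hB. Qed.
Lemma reach_word (Sigma Q : finType) (A : tNCW Sigma Q) : is_tDCW A -> forall p p',
  clos_refl_trans Q (nalpha_step A) p p' <->
  exists u, sf (delta A) (alpha A) p u /\ st (delta A) p u = p'.
Proof.
move=> detA p p'; split.
- move=> h; elim: (clos_rt_rtn1 _ _ _ _ h) => [|y z [a hyz] _ [u [hu hst]]].
    by exists [::].
  move/andP: hyz => [hin hal].
  move: hin; rewrite /in_Delta (inD detA) => /eqP hz.
  by exists (rcons u a); rewrite sf_rcons !st_rcons hst hu -hz; split.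
- case=> u [hu <-]; elim: u p hu => [|x u IH] p /=; first by move=> _; exact: rt_refl.
  move=> /andP [hx hu]; apply: rt_trans (IH _ hu).
  by apply: rt_step; exists x; rewrite /nalpha_trans /in_Delta (nxt_in detA).
Qed.

Lemma reachable_word (Sigma Q : finType) (A : tNCW Sigma Q) : is_tDCW A -> forall q,
  reachable A q -> exists x, st (delta A) (init A) x = q.
Proof.
move=> detA q h; elim: (clos_rt_rtn1 _ _ _ _ h) => [|y z [a hyz] _ [u hst]].
  by exists [::].
move: hyz; rewrite /in_Delta (inD detA) => /eqP hz.
by exists (rcons u a); rewrite st_rcons hst hz.
Qed.

Lemma prefix_cons (Sigma : Type) (w : word Sigma) n : prefix w n.+1 = w 0 :: prefix (shiftw w 1) n.
Proof. by rewrite -add1n prefixD. Qed.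

Lemma last_bad (P : nat -> bool) : (exists N, forall i, N <= i -> P i) ->
  exists M, (M = 0 \/ exists M', M = M'.+1 /\ ~~ P M') /\ forall i, M <= i -> P i.
Proof.
case=> N; elim: N => [|N IH] h; first by exists 0; split; [left|].
case hN: (P N).
  apply: IH => i; rewrite leq_eqVlt => /orP [/eqP <- //|]; exact: h.
by exists N.+1; split => //; right; exists N; rewrite hN.
Qed.

Lemma eqv_st1 (Sigma Q : finType) (A : tNCW Sigma Q) c d x : is_tDCW A ->
  equiv_states A c d -> equiv_states A (nxt (delta A) c x) (nxt (delta A) d x).
Proof. by move=> hA h; exact: (eqv_st [:: x] hA hA h). Qed.

Section Shrink.
Variables (Sigma Q : finType) (L : language Sigma) (A : tNCW Sigma Q).
Hypotheses (detA : is_tDCW A) (recA : recognizes A L) (minA : minimal_tDCW A L)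
  (posL : tDCW_positive L).
Variables (S : pred Q) (rho : Q -> Q).
Hypotheses (h1 : forall p, ~~ S (rho p)) (h3 : forall p, equiv_states A (rho p) p)
  (h4 : forall p, sub A p A (rho p))
  (h5 : forall c x, ~~ S c -> ~~ alpha A c x (nxt (delta A) c x) ->
          sub A (rho (nxt (delta A) c x)) A (nxt (delta A) c x)).
Variable (p0 : Q).
Hypothesis (h6 : S p0).

Local Notation nx := (nxt (delta A)).
Definition Q' : finType := {p : Q | ~~ S p}.
Definition rho' p : Q' := exist _ (rho p) (h1 p).
Definition dC (c : Q') x : {set Q'} := [set t : Q' | pb (equiv_states A (val t) (nx (val c) x))].
Lemma dC_ne c x : dC c x != set0.
Proof. by apply/set0Pn; exists (rho' (nx (val c) x)); rewrite inE; apply/pbP; exact: h3. Qed.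
Definition aC (c : Q') x (t : Q') : bool :=
  ~~ ((val t == rho (nx (val c) x)) && ~~ alpha A (val c) x (nx (val c) x)).
Definition C := @TNCW Sigma Q' (rho' (init A)) dC dC_ne aC.

Lemma C_sound w : accepts C w -> accepts A w.
Proof.
case=> r [[r0 rS] [N hN]].
pose dr i := st (delta A) (init A) (prefix w i).
have E : forall i, equiv_states A (val (r i)) (dr i).
  elim => [|i IH]; first by rewrite r0; exact: h3.
  have := rS i; rewrite /in_Delta /= inE => /pbP h.
  apply: eqv_trans h _; rewrite /dr prefixS st_rcons; exact: eqv_st1.
have K : forall n k, sf (delta A) (alpha A) (val (r (N + k))) (prefix (shiftw w (N + k)) n).
  elim => [|n IH] k //.
  rewrite prefix_cons shiftwD /=.
  have := hN (N + k) (leq_addr _ _); rewrite /= /aC negbK => /andP [/eqP he hs].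
  rewrite /shiftw addn0 hs /=.
  apply: (h5 (valP (r (N + k))) hs); by move: (IH k.+1); rewrite addnS he -addn1.
have hA : accepts (with_init A (val (r N))) (shiftw w N).
  by apply: (acc_safe detA) => n; have := K n 0; rewrite addn0.
have : accepts (with_init A (dr N)) (shiftw w N) by rewrite -(E N).
by rewrite -(acc_shift detA).
Qed.

Definition stepF (ac : Q * Q') x : Q * Q' :=
  let a' := nx ac.1 x in
  (a', if alpha A ac.1 x a' then rho' a' else rho' (nx (val ac.2) x)).
Definition F u := foldl stepF (init A, rho' (init A)) u.
Definition f u := (F u).2.

Lemma F_rcons u x : F (rcons u x) = stepF (F u) x.
Proof. exact: foldl_rcons. Qed.

Lemma F1 u : (F u).1 = st (delta A) (init A) u.
Proof. by elim/last_ind: u => [|u x IH] //; rewrite F_rcons st_rcons /= IH. Qed.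

Lemma F2 u : equiv_states A (val (F u).2) (F u).1.
Proof.
elim/last_ind: u => [|u x IH]; first exact: h3.
rewrite F_rcons /stepF /=; case: ifP => _ /=; first exact: h3.
apply: eqv_trans (h3 _) _; exact: eqv_st1.
Qed.

Lemma f_trans u x : in_Delta C (f u) x (f (rcons u x)).
Proof.
rewrite /in_Delta /f F_rcons /stepF /= inE; apply/pbP.
case: ifP => _ /=; last exact: h3.
apply: eqv_trans (h3 _) _; apply: eqv_st1 => //; apply: eqv_sym; exact: F2.
Qed.

Lemma f_acc w : accepts A w -> run_accepting C w (fun i => f (prefix w i)).
Proof.
move=> /(accE (A := A) detA (init A)) /last_bad [M [hM hs]].
pose dr i := st (delta A) (init A) (prefix w i).
have Fs : forall i, F (prefix w i.+1) = stepF (F (prefix w i)) (w i).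
  by move=> i; rewrite prefixS F_rcons.
have K : forall k, sub A (dr (M + k)) A (val (f (prefix w (M + k)))).
  elim => [|k IH].
    rewrite addn0; case: hM => [->|[M' [-> hM']]]; first exact: h4.
    rewrite /f Fs /stepF F1 /=; move: hM'; rewrite negbK prefixS st_rcons => ->.
    rewrite /dr prefixS st_rcons; exact: h4.
  have hk := hs (M + k) (leq_addr _ _).
  move: hk; rewrite prefixS st_rcons => hk.
  rewrite addnS /f Fs /stepF F1 /= (negbTE hk) /=.
  rewrite /dr prefixS st_rcons.
  move=> u hu; apply: h4; move: u hu.
  have := sub_st (u := [:: w (M + k)]) IH; rewrite /= hk /=.
  by move/(_ isT).
exists M => i hi.
have := K (i - M); rewrite subnKC // => hK.
rewrite /f Fs /stepF F1 /=.
have hk := hs i hi; move: hk; rewrite prefixS st_rcons => hk.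
rewrite (negbTE hk) /= /aC /= eqxx /=.
have := hK [:: w i]; rewrite /= hk /= andbT.
by rewrite !negbK; apply.
Qed.

Lemma C_GFG : is_GFG C.
Proof.
exists f; split => //; split; first exact: f_trans.
by move=> w /C_sound; exact: f_acc.
Qed.

Lemma C_rec : recognizes C L.
Proof.
move=> w; split.
- move=> /recA hw; exists (fun i => f (prefix w i)); split; last exact: f_acc.
  split => // i; rewrite prefixS; exact: f_trans.
- by move=> /C_sound /recA.
Qed.

Lemma shrink_false : False.
Proof.
have [Q2 [D [dD [rD cD]]]] := posL C_GFG C_rec.
have hm := minA dD rD.
have hQ : #|Q'| < #|Q|.
  rewrite card_sig -(cardC S).
  have -> : #|[pred x | ~~ S x]| = #|[predC S]| by apply: eq_card.
  rewrite -[X in X < _]add0n ltn_add2r.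
  by apply/card_gt0P; exists p0.
by have := leq_ltn_trans (leq_trans hm cD) hQ; rewrite ltnn.
Qed.

End Shrink.
Section Nice.
Variables (Sigma Q : finType) (L : language Sigma) (A : tNCW Sigma Q).
Hypotheses (detA : is_tDCW A) (recA : recognizes A L) (minA : minimal_tDCW A L)
  (posL : tDCW_positive L) (normA : normal A).
Local Notation nx := (nxt (delta A)).

Lemma SM p p' : equiv_states A p p' -> sub A p A p' -> sub A p' A p -> p = p'.
Proof.
move=> he hs1 hs2; case: (eqVneq p p') => // hne; exfalso.
pose rho := fun t => if t == p' then p else t.
apply: (@shrink_false _ _ L A detA recA minA posL (pred1 p') rho _ _ _ _ p').
- move=> t; rewrite /rho; case: (eqVneq t p') => [e|h] /=.
    exact: hne.
  exact: h.
- move=> t; rewrite /rho; case: (eqVneq t p') => [e|h] //=.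
  by rewrite e.
- move=> t; rewrite /rho; case: (eqVneq t p') => [e|h] //=.
  by rewrite e.
- move=> c x _ _; rewrite /rho; case: (eqVneq (nx c x) p') => [e|h] //=.
  by rewrite e.
- by rewrite /= eqxx.
Qed.

Lemma step_reach c x : ~~ alpha A c x (nx c x) -> clos_refl_trans Q (nalpha_step A) c (nx c x).
Proof.
by move=> h; apply: rt_step; exists x; rewrite /nalpha_trans /in_Delta (nxt_in detA).
Qed.

Lemma SC p p' : equiv_states A p p' -> sub A p A p' -> clos_refl_trans Q (nalpha_step A) p' p.
Proof.
move=> he hs; case: (classic (clos_refl_trans Q (nalpha_step A) p' p)) => // hn; exfalso.
pose reach x y := clos_refl_trans Q (nalpha_step A) x y.
pose S t := pb (reach p t).
have exU : forall t, exists u, S t -> sf (delta A) (alpha A) p u /\ st (delta A) p u = t.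
  move=> t; case: (pbP (reach p t)) => [h|h].
    by have [u hu] := (reach_word detA p t).1 h; exists u.
  by exists [::] => /pbP.
pose U t := proj1_sig (constructive_indefinite_description _ (exU t)).
have UP : forall t, S t -> sf (delta A) (alpha A) p (U t) /\ st (delta A) p (U t) = t.
  by move=> t; exact: (proj2_sig (constructive_indefinite_description _ (exU t))).
pose rho t := if S t then st (delta A) p' (U t) else t.
apply: (@shrink_false _ _ L A detA recA minA posL S rho _ _ _ _ p).
- move=> t; rewrite /rho; case: ifP => [hS|->] //.
  have [hu hst] := UP t hS.
  have hr : reach p' (st (delta A) p' (U t)).
    by apply/(reach_word detA); exists (U t); split => //; exact: hs.
  apply/negP => /pbP hr2.
  apply: hn; apply: normA; apply: rt_trans hr2 _; exact: normA.
- move=> t; rewrite /rho; case: ifP => [hS|_] //.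
  have [hu hst] := UP t hS.
  rewrite -{2}hst; apply: eqv_st => //; exact: eqv_sym.
- move=> t; rewrite /rho; case: ifP => [hS|_] //.
  have [hu hst] := UP t hS.
  rewrite -{1}hst; exact: sub_st.
- move=> c x hc hx; rewrite /rho; case: ifP => [hS|_] //.
  exfalso; move/negP: hc; apply; apply/pbP.
  move/pbP: hS => hS; apply: rt_trans hS _; apply: normA; exact: step_reach.
- by apply/pbP; exact: rt_refl.
Qed.

End Nice.
Lemma pigeon (T : finType) (g : nat -> T) : exists i j, i < j /\ g i = g j.
Proof.
case: (classic (exists i j, i < j /\ g i = g j)) => // H; exfalso.
have inj : injective (fun i : 'I_(#|T|.+1) => g i).
  move=> a b hab; apply/val_inj => /=.
  case: (ltngtP a b) => // hlt; exfalso; apply: H.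
  - by exists a, b.
  - by exists b, a.
by have := leq_card _ inj; rewrite card_ord ltnn.
Qed.

Lemma cross (Sigma Q1 Q2 : finType) (L : language Sigma) (A : tNCW Sigma Q1) (B : tNCW Sigma Q2) :
  is_tDCW A -> is_tDCW B -> (forall q, reachable A q) -> normal A ->
  recognizes A L -> recognizes B L ->
  forall q, exists s, eqv A q B s /\ sub A q B s.
Proof.
move=> dA dB reachA normA rA rB q.
case: (classic (exists s, eqv A q B s /\ sub A q B s)) => // H; exfalso.
have [x hx] := reachable_word dA (reachA q).
have exZ : forall s, exists z : seq Sigma, eqv A q B s ->
    [/\ sf (delta A) (alpha A) q z, st (delta A) q z = q & ~~ sf (delta B) (alpha B) s z].
  move=> s; case: (classic (eqv A q B s)) => hs; last by exists [::].
  have [u [hu1 hu2]] : exists u, sf (delta A) (alpha A) q u /\ ~~ sf (delta B) (alpha B) s u.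
    case: (classic (exists u, sf (delta A) (alpha A) q u /\ ~~ sf (delta B) (alpha B) s u)) => // hno.
    exfalso; apply: H; exists s; split => // u hu.
    case: (boolP (sf (delta B) (alpha B) s u)) => // hb; exfalso; apply: hno; by exists u.
  have hr : clos_refl_trans Q1 (nalpha_step A) (st (delta A) q u) q.
    by apply: normA; apply/(reach_word dA); exists u.
  have [v [hv1 hv2]] := (reach_word dA _ _).1 hr.
  exists (u ++ v) => _; split.
  - by rewrite sf_cat hu1.
  - by rewrite st_cat.
  - by apply/negP => /sf_catl; apply/negP.
pose Z s := proj1_sig (constructive_indefinite_description _ (exZ s)).
have ZP : forall s, eqv A q B s ->
    [/\ sf (delta A) (alpha A) q (Z s), st (delta A) q (Z s) = q & ~~ sf (delta B) (alpha B) s (Z s)].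
  by move=> s; exact: (proj2_sig (constructive_indefinite_description _ (exZ s))).
pose sk k := iter k (fun s => st (delta B) s (Z s)) (st (delta B) (init B) x).
have E : forall k, eqv A q B (sk k).
  elim => [|k IH].
    by rewrite /sk /= -hx; apply: eqv_st => //; exact: (eqv_init rA rB).
  have [h1 h2 h3] := ZP _ IH.
  rewrite /sk iterS -/(sk k) -{1}h2; exact: eqv_st.
pose chunks a n := flatten [seq Z (sk k) | k <- iota a n].
have chB : forall n a, st (delta B) (sk a) (chunks a n) = sk (a + n).
  elim => [|n IH] a; first by rewrite addn0.
  by rewrite /chunks /= st_cat -/(chunks _ _) -[st _ (sk a) _]/(sk a.+1) IH addSnnS.
have chA : forall n a, st (delta A) q (chunks a n) = q /\ sf (delta A) (alpha A) q (chunks a n).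
  elim => [|n IH] a //.
  have [h1 h2 _] := ZP _ (E a).
  have [IH1 IH2] := IH a.+1.
  by rewrite /chunks /= st_cat sf_cat -/(chunks _ _) h2 IH1 h1 IH2.
have [i [j [hij hsk]]] := pigeon sk.
pose y := chunks i (j - i).
have hy : y = Z (sk i) ++ chunks i.+1 (j - i).-1.
  rewrite /y /chunks; case e: (j - i) => [|n]; first by move: hij; rewrite -subn_gt0 e.
  by [].
have [_ _ h3] := ZP _ (E i).
have nsB : ~~ sf (delta B) (alpha B) (sk i) y.
  by rewrite hy; apply/negP => /sf_catl; apply/negP.
have stB : st (delta B) (sk i) y = sk i by rewrite /y chB subnKC ?(ltnW hij).
have [stA sfA] := chA (j - i) i.
case ey : y nsB stB => [|x0 y'] nsB stB; first by [].
have py : 0 < size (x0 :: y') by [].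
pose pp := x ++ chunks 0 i.
pose w := catw pp (omegaw x0 (x0 :: y')).
have wA : accepts A w.
  rewrite -[accepts A w]/(accepts (with_init A (init A)) w) (acc_cat dA) st_cat hx.
  have [-> _] := chA i 0.
  by apply: (omega_acc dA) => //; rewrite -ey.
have := (eqv_init rA rB w).1 wA.
rewrite (acc_cat dB) st_cat -[st _ (init B) x]/(sk 0) chB add0n.
exact: (omega_rej dB).
Qed.
Lemma sf1 (Sigma Q : finType) (d : Q -> Sigma -> {set Q}) al c a :
  sf d al c [:: a] = ~~ al c a (nxt d c a).
Proof. by rewrite /= andbT. Qed.

Lemma nalphaE (Sigma Q : finType) (A : tNCW Sigma Q) : is_tDCW A -> forall q a q',
  nalpha_trans A q a q' = (q' == nxt (delta A) q a) && sf (delta A) (alpha A) q [:: a].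
Proof.
move=> dA q a q'; rewrite /nalpha_trans /in_Delta (inD dA) sf1.
by case: eqP => // ->.
Qed.

Theorem mainTheorem13 (Sigma : finType) (L : language Sigma)
  (hreg : omega_regular L) (hpos : tDCW_positive L)
  (Q1 Q2 : finType) (A1 : tNCW Sigma Q1) (A2 : tNCW Sigma Q2) :
  is_tDCW A1 -> is_tDCW A2 ->
  nice A1 -> nice A2 ->
  recognizes A1 L -> recognizes A2 L ->
  minimal_tDCW A1 L -> minimal_tDCW A2 L ->
  safe_isomorphic A1 A2.
Proof.
move=> d1 d2 [reach1 [_ [_ [_ norm1]]]] [reach2 [_ [_ [_ norm2]]]] r1 r2 m1 m2.
have C12 := cross d1 d2 reach1 norm1 r1 r2.
have C21 := cross d2 d1 reach2 norm2 r2 r1.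
pose h1 q := proj1_sig (constructive_indefinite_description _ (C12 q)).
have H1 : forall q, eqv A1 q A2 (h1 q) /\ sub A1 q A2 (h1 q).
  by move=> q; exact: (proj2_sig (constructive_indefinite_description _ (C12 q))).
pose h2 s := proj1_sig (constructive_indefinite_description _ (C21 s)).
have H2 : forall s, eqv A2 s A1 (h2 s) /\ sub A2 s A1 (h2 s).
  by move=> s; exact: (proj2_sig (constructive_indefinite_description _ (C21 s))).
have SM1 := SM d1 r1 m1 hpos.
have SM2 := SM d2 r2 m2 hpos.
have SC1 := SC d1 r1 m1 hpos norm1.
have K : forall q, exists s, [/\ eqv A1 q A2 s, sub A1 q A2 s & sub A2 s A1 q].
  move=> q.
  pose g k := iter k (fun p => h2 (h1 p)) q.
  have gS : forall k, g k.+1 = h2 (h1 (g k)) by [].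
  have chain : forall n a, sub A1 (g a) A1 (g (a + n)).
    elim => [|n IH] a; first by rewrite addn0.
    rewrite addnS gS; apply: sub_trans (IH a) _.
    by apply: sub_trans (H1 _).2 (H2 _).2.
  have eqg : forall k, eqv A1 q A1 (g k).
    elim => [|k IH] //; rewrite gS; apply: eqv_trans IH _.
    by apply: eqv_trans (H1 _).1 (H2 _).1.
  have [i [j [hij hg]]] := pigeon g.
  pose r := g i.
  have s1 : sub A1 r A2 (h1 r) := (H1 r).2.
  have s2 : sub A2 (h1 r) A1 r.
    apply: sub_trans (H2 _).2 _; rewrite -gS /r hg.
    by have := chain (j - i.+1) i.+1; rewrite subnKC.
  have e1 : eqv A1 r A2 (h1 r) := (H1 r).1.
  have hsub0 : sub A1 q A1 r by have := chain i 0; rewrite add0n.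
  have hreach := SC1 _ _ (eqg i) hsub0.
  have [v [hv hst]] := (reach_word d1 _ _).1 hreach.
  exists (st (delta A2) (h1 r) v); rewrite -hst; split.
  - exact: eqv_st.
  - exact: sub_st.
  - by apply: sub_st => //; exact: s1.
pose kap q := proj1_sig (constructive_indefinite_description _ (K q)).
have KP : forall q, [/\ eqv A1 q A2 (kap q), sub A1 q A2 (kap q) & sub A2 (kap q) A1 q].
  by move=> q; exact: (proj2_sig (constructive_indefinite_description _ (K q))).
have kinj : injective kap.
  move=> a b hab; have [ea sa ta] := KP a; have [eb sb tb] := KP b.
  apply: SM1.
  - by apply: eqv_trans ea _; rewrite hab; exact: eqv_sym.
  - by apply: sub_trans sa _; rewrite hab.
  - by apply: sub_trans sb _; rewrite -hab.
exists kap; split; first by apply: inj_card_bij kinj _; exact: m2 d1 r1.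
move=> q q' a; rewrite (nalphaE d1) (nalphaE d2).
have [eq sq tq] := KP q; have [eq' sq' tq'] := KP q'.
split => [/andP [/eqP hq' hs]|/andP [/eqP hk hs]]; apply/andP.
- have hs2 : sf (delta A2) (alpha A2) (kap q) [:: a] := sq _ hs.
  split => //; apply/eqP; apply: SM2.
  + apply: eqv_trans (eqv_sym eq') _.
    by have := eqv_st [:: a] d1 d2 eq; rewrite /= -hq'.
  + apply: sub_trans tq' _.
    by have := sub_st sq hs; rewrite /= -hq'.
  + apply: sub_trans sq'.
    by have := sub_st tq hs2; rewrite /= -hq'.
- have hs1 : sf (delta A1) (alpha A1) q [:: a] := tq _ hs.
  split => //; apply/eqP; apply: SM1.
  + have := eqv_st [:: a] d1 d2 eq; rewrite /= -hk => h.
    exact: eqv_trans eq' (eqv_sym h).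
  + have := sub_st tq hs; rewrite /= -hk => h; exact: sub_trans sq' h.
  + have := sub_st sq hs1; rewrite /= -hk => h; exact: sub_trans h tq'.
Qed.
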